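(* Let $S$ be a numerical semigroup with $\mathrm{l}(S)=2$. Then $\{\mathrm{F}(S),\mathrm{h}(S)\}\subseteq\mathrm{PF}(S)\subseteq\{\mathrm{F}(S),\mathrm{h}(S),\mathrm{F}(S)-\mathrm{h}(S)\}$. Moreover, $\mathrm{F}(S)-\mathrm{h}(S)\in\mathrm{PF}(S)$ if and only if $2\mathrm{h}(S)-\mathrm{F}(S)\notin S$.
   Context: A numerical semigroup is a subset $S\subseteq\mathbb{N}$ closed under addition with $0\in S$ and $\mathbb{N}\setminus S$ finite; $\mathrm{F}(S)=\max(\mathbb{Z}\setminus S)$. $\mathrm{N}(S)=\{s\in S\mid s<\mathrm{F}(S)\}$, $\mathrm{L}(S)=\{x\in\mathbb{N}\setminus S\mid \mathrm{F}(S)-x\notin \mathrm{N}(S)\}$, $\mathrm{l}(S)=\#\mathrm{L}(S)$. For $\mathrm{l}(S)\ge2$, $\mathrm{h}(S)=\max\{x\in\mathbb{N}\setminus S\mid \mathrm{F}(S)-x\in\mathbb{N}\setminus S,\ x\ne \mathrm{F}(S)/2\}$. $\mathrm{PF}(S)=\{x\in\mathbb{Z}\setminus S\mid x+s\in S \text{ for all } s\in S\setminus\{0\}\}$. *)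

(* Defs.v *)
From Stdlib Require Import ZArith Lia.
Open Scope Z_scope.

Definition is_numerical_semigroup (S : Z -> Prop) : Prop :=
  (forall x, S x -> 0 <= x) /\
  S 0 /\
  (forall x y, S x -> S y -> S (x + y)) /\
  (* N \ S is finite: there is a bound beyond which every natural is in S *)
  (exists m, forall x, m <= x -> S x).

Definition is_max (P : Z -> Prop) (m : Z) : Prop :=
  P m /\ forall x, P x -> x <= m.

Definition is_Frobenius (S : Z -> Prop) (F : Z) : Prop :=
  is_max (fun x => ~ S x) F.

Definition gap (S : Z -> Prop) (x : Z) : Prop := 0 <= x /\ ~ S x.

Definition Nset (S : Z -> Prop) (F : Z) (s : Z) : Prop := S s /\ s < F.

Definition Lset (S : Z -> Prop) (F : Z) (x : Z) : Prop :=
  gap S x /\ ~ Nset S F (F - x).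

Definition l_eq_2 (S : Z -> Prop) (F : Z) : Prop :=
  exists a b, a <> b /\ forall x, Lset S F x <-> (x = a \/ x = b).

Definition is_h (S : Z -> Prop) (F : Z) (h : Z) : Prop :=
  is_max (fun x => gap S x /\ gap S (F - x) /\ 2 * x <> F) h.

Definition PF (S : Z -> Prop) (x : Z) : Prop :=
  ~ S x /\ forall s, S s -> s <> 0 -> S (x + s).

(* Main.v *)
Require Import Defs.
From Stdlib Require Import ZArith Lia Classical.
Open Scope Z_scope.

Theorem proposition12 (S : Z -> Prop) (F h : Z)
  (HS : is_numerical_semigroup S)
  (HF : is_Frobenius S F)
  (Hl : l_eq_2 S F)
  (Hh : is_h S F h) :
  (PF S F /\ PF S h) /\
  (forall x, PF S x -> x = F \/ x = h \/ x = F - h) /\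
  (PF S (F - h) <-> ~ S (2 * h - F)).
Proof.
  destruct HS as [Hpos [H0 [Hadd _]]].
  destruct HF as [HnF HFmax].
  destruct Hl as [a [b [Hab HL]]].
  destruct Hh as [[[Hh0 Hhn] [[Hfh0 Hfhn] Hh2]] Hhmax].
  assert (Hlt : F - h <= h).
  { apply Hhmax. repeat split; try lia; auto.
    replace (F - (F - h)) with h by lia; auto. }
  assert (KEY : forall x, gap S x -> gap S (F - x) -> x = h \/ x = F - h).
  { intros x Gx GFx.
    assert (Lx : Lset S F x) by (split; [auto | intros [N _]; apply GFx; auto]).
    assert (Lh : Lset S F h) by (split; [split; auto | intros [N _]; auto]).
    assert (Lfh : Lset S F (F - h)).
    { split; [split; auto|]. intros [N _].
      replace (F - (F - h)) with h in N by lia; auto. }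
    apply HL in Lx; apply HL in Lh; apply HL in Lfh. lia. }
  assert (Spos : forall s, S s -> s <> 0 -> 0 < s).
  { intros s Hs Hs0. specialize (Hpos s Hs). lia. }
  split; [split|split].
  - split; auto. intros s Hs Hs0. destruct (classic (S (F + s))) as [?|N]; auto.
    specialize (HFmax _ N). specialize (Spos s Hs Hs0). lia.
  - split; auto. intros s Hs Hs0. destruct (classic (S (h + s))) as [?|N]; auto.
    exfalso. pose proof (HFmax _ N). pose proof (Spos s Hs Hs0).
    assert (G1 : gap S (h + s)) by (split; [lia | auto]).
    assert (G2 : gap S (F - (h + s))).
    { split; [lia|]. intro C. apply Hfhn.
      replace (F - h) with (F - (h + s) + s) by lia. auto. }
    destruct (KEY _ G1 G2); lia.
  - intros x [Nx Px].
    destruct (Z_lt_le_dec x 0) as [Hx|Hx].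
    + exfalso. assert (SF : S (F - x)).
      { destruct (classic (S (F - x))) as [?|N]; auto. specialize (HFmax _ N). lia. }
      specialize (Px _ SF ltac:(lia)). replace (x + (F - x)) with F in Px by lia. auto.
    + pose proof (HFmax _ Nx).
      destruct (Z.eq_dec x F) as [->|Hne]; [auto|right].
      apply KEY; [split; auto|]. split; [lia|]. intro C.
      specialize (Px _ C ltac:(lia)). replace (x + (F - x)) with F in Px by lia. auto.
  - split.
    + intros [_ P] C. assert (2 * h - F <> 0) by lia.
      specialize (P _ C H). replace (F - h + (2 * h - F)) with h in P by lia. auto.
    + intros N. split; auto. intros s Hs Hs0.
      destruct (classic (S (F - h + s))) as [?|N2]; auto.
      exfalso. pose proof (HFmax _ N2). pose proof (Spos s Hs Hs0).
      assert (G1 : gap S (F - h + s)) by (split; [lia | auto]).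
      assert (G2 : gap S (F - (F - h + s))).
      { split; [lia|]. intro C. apply Hhn.
        replace h with (F - (F - h + s) + s) by lia. auto. }
      destruct (KEY _ G1 G2) as [E|E]; [|lia].
      apply N. replace (2 * h - F) with s by lia. auto.
Qed.
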